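(* Let $m\ge 2$, let $K\ne\Delta_{[m]}$ be a simplicial complex on $[m]$ and let $i\in[m]$ with $i\in V(K)$ and $i'\in V(K^\vee)$. Then $\mathrm{Bier}(K)$ is a weak suspension with vertex pair $\{i,i'\}$ if and only if $K$ is a weak cone with apex $i$ and $K^\vee$ is a weak cone with apex $i'$.
   Context: A simplicial complex $K$ on $[m]=\{1,\dots,m\}$ is a nonempty family of subsets of $[m]$ closed under taking subsets; $V(K)=\{i:\{i\}\in K\}$. $\Delta_{[m]}=2^{[m]}$. Let $[m']=\{1',\dots,m'\}$ be a disjoint copy of $[m]$, $I'=\{i':i\in I\}$. For $K\ne\Delta_{[m]}$ the Alexander dual $K^\vee$ is the complex on $[m']$ with $J'\in K^\vee$ iff $[m]\setminus J\notin K$. The Bier sphere $\mathrm{Bier}(K)$ is the complex on $[m]\sqcup[m']$ with faces $I\sqcup J'$, $I\in K$, $J'\in K^\vee$, $I\cap J=\varnothing$. A complex $L$ is a weak cone with apex $a\in V(L)$ if $\{a,v\}\in L$ for all $v\in V(L)\setminus\{a\}$. $L$ is a weak suspension with vertex pair $\{a,b\}$ if $a,b\in V(L)$ are distinct, $\{a,b\}\notin L$, and each of $a,b$ forms an edge of $L$ with every vertex of $V(L)\setminus\{a,b\}$. *)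

(* Defs.v *)
From mathcomp Require Import all_boot.
Set Implicit Arguments. Unset Strict Implicit. Unset Printing Implicit Defensive.

(* Vertex set [m] is modelled by 'I_m (0-indexed); the disjoint union
   [m] ⊔ [m'] is the sum type 'I_m + 'I_m, with i ↦ inl i and i' ↦ inr i. *)

Section Complexes.
Variable T : finType.

Definition simplicial_complex (K : {set {set T}}) : Prop :=
  K != set0 /\ forall A B : {set T}, A \in K -> B \subset A -> B \in K.

Definition vertices (K : {set {set T}}) : {set T} := [set v | [set v] \in K].

Definition full_simplex : {set {set T}} := [set: {set T}].

Definition weak_cone (L : {set {set T}}) (a : T) : Prop :=
  a \in vertices L /\
  forall v, v \in vertices L -> v != a -> [set a; v] \in L.

Definition weak_suspension (L : {set {set T}}) (a b : T) : Prop :=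
  [/\ a \in vertices L, b \in vertices L, a != b, [set a; b] \notin L &
   forall v, v \in vertices L -> v != a -> v != b ->
     [set a; v] \in L /\ [set b; v] \in L].
End Complexes.

(* Alexander dual of K on [m]; it lives on the copy [m'], which we identify
   with 'I_m via i' ↦ i:  J' ∈ K^∨  iff  [m] \ J ∉ K. *)
Definition alex_dual (m : nat) (K : {set {set 'I_m}}) : {set {set 'I_m}} :=
  [set J | ~: J \notin K].

Definition bier (m : nat) (K : {set {set 'I_m}}) : {set {set ('I_m + 'I_m)}} :=
  [set ((@inl 'I_m 'I_m) @: I) :|: ((@inr 'I_m 'I_m) @: J)
   | I : {set 'I_m} in K, J : {set 'I_m} in alex_dual K & [disjoint I & J]].

(* Main.v *)
Require Import Defs.
From mathcomp Require Import all_boot.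

Set Implicit Arguments. Unset Strict Implicit. Unset Printing Implicit Defensive.

Section H.
Variable m : nat.
Implicit Types (a b x : 'I_m).

Lemma inl_eqE a b : (inl a == inl b :> 'I_m + 'I_m) = (a == b).
Proof. by apply/eqP/eqP => [[]|->]. Qed.
Lemma inr_eqE a b : (inr a == inr b :> 'I_m + 'I_m) = (a == b).
Proof. by apply/eqP/eqP => [[]|->]. Qed.
Lemma inlr_eqE a b : (inl a == inr b :> 'I_m + 'I_m) = false.
Proof. by apply/eqP. Qed.
Lemma inrl_eqE a b : (inr a == inl b :> 'I_m + 'I_m) = false.
Proof. by apply/eqP. Qed.

Definition Lp (S : {set 'I_m + 'I_m}) : {set 'I_m} := [set x | inl x \in S].
Definition Rp (S : {set 'I_m + 'I_m}) : {set 'I_m} := [set x | inr x \in S].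

Lemma inl_injm : injective (@inl 'I_m 'I_m). Proof. by move=> a b []. Qed.
Lemma inr_injm : injective (@inr 'I_m 'I_m). Proof. by move=> a b []. Qed.
Lemma inl_in_inr (B : {set 'I_m}) x : (inl x \in (@inr 'I_m 'I_m) @: B) = false.
Proof. by apply/negbTE/imsetP => -[y _]. Qed.
Lemma inr_in_inl (B : {set 'I_m}) x : (inr x \in (@inl 'I_m 'I_m) @: B) = false.
Proof. by apply/negbTE/imsetP => -[y _]. Qed.

Lemma LpRp S : S = (@inl 'I_m 'I_m) @: Lp S :|: (@inr 'I_m 'I_m) @: Rp S.
Proof.
apply/setP => [[x|x]]; rewrite !inE ?inl_in_inr ?inr_in_inl
  ?(mem_imset _ _ inl_injm) ?(mem_imset _ _ inr_injm) !inE ?orbF //.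
Qed.

Lemma Lp_im (I J : {set 'I_m}) : Lp ((@inl 'I_m 'I_m) @: I :|: (@inr 'I_m 'I_m) @: J) = I.
Proof.
by apply/setP => x; rewrite !inE inl_in_inr (mem_imset _ _ inl_injm) orbF.
Qed.
Lemma Rp_im (I J : {set 'I_m}) : Rp ((@inl 'I_m 'I_m) @: I :|: (@inr 'I_m 'I_m) @: J) = J.
Proof.
by apply/setP => x; rewrite !inE inr_in_inl (mem_imset _ _ inr_injm).
Qed.

Lemma bierP (K : {set {set 'I_m}}) S :
  S \in bier K <-> [/\ Lp S \in K, Rp S \in alex_dual K & [disjoint Lp S & Rp S]].
Proof.
split.
- move=> /imset2P[I J hI]; rewrite inE => /andP[hJ hd] ->.
  by rewrite Lp_im Rp_im.
- case=> h1 h2 h3; rewrite (LpRp S); apply/imset2P; exists (Lp S) (Rp S) => //.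
  by rewrite inE h2.
Qed.
End H.

Theorem mainTheorem4 (m : nat) (hm : 2 <= m) (K : {set {set 'I_m}})
  (hK : simplicial_complex K) (hKD : K != full_simplex 'I_m)
  (i : 'I_m) (hi : i \in vertices K) (hi' : i \in vertices (alex_dual K)) :
  weak_suspension (bier K) (inl i) (inr i) <->
  weak_cone K i /\ weak_cone (alex_dual K) i.
Proof.
case: hK => hK0 hKc.
have hE : set0 \in K.
  case/set0Pn: hK0 => A hA; exact: (hKc A) (sub0set A).
have hT : setT \notin K.
  apply: contra hKD => hT; apply/eqP/setP => A; rewrite !inE.
  exact: (hKc setT) (subsetT A).
have hD0 : set0 \in alex_dual K by rewrite inE setC0.
have hDc : forall A B : {set 'I_m}, A \in alex_dual K -> B \subset A -> B \in alex_dual K.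
  move=> A B; rewrite !inE => hA hBA; apply: contra hA => hB.
  by apply: (hKc _ _ hB); rewrite setCS.
have Vl : forall u : 'I_m, (inl u \in vertices (bier K)) = ([set u] \in K).
  move=> u; rewrite inE; apply/idP/idP => [/bierP[h1 h2 h3]|h].
    by move: h1; congr (_ \in K); apply/setP => x; rewrite !inE ?(inl_eqE, inr_eqE, inlr_eqE, inrl_eqE, orbF, orFb, andbF, andFb).
  apply/bierP; split.
  - by move: h; congr (_ \in K); apply/setP => x; rewrite !inE ?(inl_eqE, inr_eqE, inlr_eqE, inrl_eqE, orbF, orFb, andbF, andFb).
  - by move: hD0; congr (_ \in alex_dual K); apply/setP => x; rewrite !inE ?(inl_eqE, inr_eqE, inlr_eqE, inrl_eqE, orbF, orFb, andbF, andFb).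
  - by rewrite -setI_eq0; apply/eqP/setP => x; rewrite !inE ?(inl_eqE, inr_eqE, inlr_eqE, inrl_eqE, orbF, orFb, andbF, andFb).
have Vr : forall u : 'I_m, (inr u \in vertices (bier K)) = ([set u] \in alex_dual K).
  move=> u; rewrite [in LHS]inE; apply/idP/idP => [/bierP[h1 h2 h3]|h].
    by move: h2; congr (_ \in alex_dual K); apply/setP => x; rewrite !inE ?(inl_eqE, inr_eqE, inlr_eqE, inrl_eqE, orbF, orFb, andbF, andFb).
  apply/bierP; split.
  - by move: hE; congr (_ \in K); apply/setP => x; rewrite !inE ?(inl_eqE, inr_eqE, inlr_eqE, inrl_eqE, orbF, orFb, andbF, andFb).
  - by move: h; congr (_ \in alex_dual K); apply/setP => x; rewrite !inE ?(inl_eqE, inr_eqE, inlr_eqE, inrl_eqE, orbF, orFb, andbF, andFb).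
  - by rewrite -setI_eq0; apply/eqP/setP => x; rewrite !inE ?(inl_eqE, inr_eqE, inlr_eqE, inrl_eqE, orbF, orFb, andbF, andFb).
have LL : forall a b : 'I_m, ([set inl a; inl b] \in bier K) = ([set a; b] \in K).
  move=> a b; apply/idP/idP => [/bierP[h1 h2 h3]|h].
    by move: h1; congr (_ \in K); apply/setP => x; rewrite !inE ?(inl_eqE, inr_eqE, inlr_eqE, inrl_eqE, orbF, orFb, andbF, andFb).
  apply/bierP; split.
  - by move: h; congr (_ \in K); apply/setP => x; rewrite !inE ?(inl_eqE, inr_eqE, inlr_eqE, inrl_eqE, orbF, orFb, andbF, andFb).
  - by move: hD0; congr (_ \in alex_dual K); apply/setP => x; rewrite !inE ?(inl_eqE, inr_eqE, inlr_eqE, inrl_eqE, orbF, orFb, andbF, andFb).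
  - by rewrite -setI_eq0; apply/eqP/setP => x; rewrite !inE ?(inl_eqE, inr_eqE, inlr_eqE, inrl_eqE, orbF, orFb, andbF, andFb).
have RR : forall a b : 'I_m, ([set inr a; inr b] \in bier K) = ([set a; b] \in alex_dual K).
  move=> a b; apply/idP/idP => [/bierP[h1 h2 h3]|h].
    by move: h2; congr (_ \in alex_dual K); apply/setP => x; rewrite !inE ?(inl_eqE, inr_eqE, inlr_eqE, inrl_eqE, orbF, orFb, andbF, andFb).
  apply/bierP; split.
  - by move: hE; congr (_ \in K); apply/setP => x; rewrite !inE ?(inl_eqE, inr_eqE, inlr_eqE, inrl_eqE, orbF, orFb, andbF, andFb).
  - by move: h; congr (_ \in alex_dual K); apply/setP => x; rewrite !inE ?(inl_eqE, inr_eqE, inlr_eqE, inrl_eqE, orbF, orFb, andbF, andFb).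
  - by rewrite -setI_eq0; apply/eqP/setP => x; rewrite !inE ?(inl_eqE, inr_eqE, inlr_eqE, inrl_eqE, orbF, orFb, andbF, andFb).
have LR : forall a b : 'I_m, [set a] \in K -> [set b] \in alex_dual K -> a != b ->
    [set inl a; inr b] \in bier K.
  move=> a b ha hb hab; apply/bierP; split.
  - by move: ha; congr (_ \in K); apply/setP => x; rewrite !inE ?(inl_eqE, inr_eqE, inlr_eqE, inrl_eqE, orbF, orFb, andbF, andFb).
  - by move: hb; congr (_ \in alex_dual K); apply/setP => x; rewrite !inE ?(inl_eqE, inr_eqE, inlr_eqE, inrl_eqE, orbF, orFb, andbF, andFb).
  - rewrite -setI_eq0; apply/eqP/setP => x; rewrite !inE ?(inl_eqE, inr_eqE, inlr_eqE, inrl_eqE, orbF, orFb, andbF, andFb).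
    apply/negbTE/andP => -[/eqP-> /eqP e]; by move: hab; rewrite e eqxx.
have hiK : [set i] \in K by rewrite inE in hi.
have hiD : [set i] \in alex_dual K by move: hi'; rewrite [in X in X -> _]inE.
split.
- case=> _ _ _ _ h; split; split => // v hv hvi.
  + have := h (inl v); rewrite Vl ?(inl_eqE, inr_eqE, inlr_eqE, inrl_eqE, orbF, orFb, andbF, andFb).
    rewrite inE in hv; case/(_ hv hvi isT) => + _.
    by rewrite LL.
  + have := h (inr v); rewrite Vr ?(inl_eqE, inr_eqE, inlr_eqE, inrl_eqE, orbF, orFb, andbF, andFb).
    move: hv; rewrite [in X in X -> _]inE => hv.
    case/(_ hv isT hvi) => _.
    by rewrite RR.
- case=> [[_ hc1] [_ hc2]]; split.
  + by rewrite Vl.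
  + by rewrite Vr.
  + by rewrite ?(inl_eqE, inr_eqE, inlr_eqE, inrl_eqE, orbF, orFb, andbF, andFb).
  + apply/negP => /bierP[_ _]; rewrite -setI_eq0 => /eqP/setP/(_ i).
    by rewrite !inE ?(inl_eqE, inr_eqE, inlr_eqE, inrl_eqE, orbF, orFb, andbF, andFb) eqxx.
  + move=> [u|u]; rewrite ?Vl ?Vr ?(inl_eqE, inr_eqE, inlr_eqE, inrl_eqE, orbF, orFb, andbF, andFb) => hu h1 h2.
    * split; first by rewrite LL; apply: hc1 => //; rewrite inE.
      have hui := h1.
      rewrite setUC; apply: LR => //; by rewrite eq_sym.
    * have hui := h2.
      split; first by apply: LR => //; rewrite eq_sym.
      by rewrite RR; apply: hc2 => //; rewrite inE.
Qed.
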